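(* Consider a finite set of flows $\mathcal K$, each flow $k$ with rate $r_k>0$ associated to a beam $v_k\in V$; let $n_v=|\{k:v_k=v\}|$ and assume $n_v\ge1$ for all $v\in V$. The problem $$\text{maximize } \sum_{k\in\mathcal K}\ln(r_k\gamma_{v_k}\delta_k)\quad\text{subject to } \gamma\in\mathrm{conv}(\mathcal Z),\ \delta\in\Delta$$ has the unique optimal solution $\delta^\star_k=1/n_{v_k}$ and $\gamma^\star_v=\kappa^\star_v\prod_{v'\in\mathcal A(v)}(1-\kappa^\star_{v'})$ with $\kappa^\star_v=n_v/\sum_{v'\in\bar{\mathcal D}(v)}n_{v'}$, i.e. $$\gamma^\star_v=\frac{n_v}{\sum_{v'\in\bar{\mathcal D}(v)}n_{v'}}\prod_{v''\in\mathcal A(v)}\frac{\sum_{v'\in\mathcal D(v'')}n_{v'}}{\sum_{v'\in\bar{\mathcal D}(v'')}n_{v'}}.$$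
   Context: $G=(V,E)$ is a finite directed rooted tree with vertex set $V=\{1,\dots,|V|\}$ and root $1$, edges oriented from parent to child. For $v\in V$: $\mathcal A(v)$ is the set of strict ancestors of $v$, $\bar{\mathcal A}(v)=\mathcal A(v)\cup\{v\}$, $\mathcal D(v)$ is the set of strict descendants of $v$, $\bar{\mathcal D}(v)=\mathcal D(v)\cup\{v\}$, and $d(v)$ is the number of children of $v$. $\mathcal Z=\{z\in\{0,1\}^{V}: z_v z_{v'}=0 \text{ for all } v\in V,\ v'\in\mathcal A(v)\}$ and $\mathrm{conv}(\mathcal Z)$ is its convex hull. $\Delta=\{\delta\in[0,1]^{\mathcal K}: \sum_{k: v_k=v}\delta_k=1\ \forall v\in V\}$. *)

(* Defs.v *)
From Stdlib Require Import Reals List Arith Bool.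
Import ListNotations.
Open Scope R_scope.

(* Vertices are 0 .. N-1 (the paper's 1 .. |V| shifted by one), root 0.
   The tree is given by a parent map [par]; par 0 is irrelevant. *)
Definition is_rooted_tree (N : nat) (par : nat -> nat) : Prop :=
  (0 < N)%nat /\
  (forall v, (0 < v < N)%nat -> (par v < N)%nat) /\
  (forall v, (v < N)%nat -> exists k, Nat.iter k par v = 0%nat).

(* [ancb N par a v] : a is a strict ancestor of v, i.e. a = par^k v for some
   k >= 1, the upward path not passing through the root before step k.
   (In a tree on N vertices every depth is < N, so k ranges over 1..N.) *)
Definition ancb (N : nat) (par : nat -> nat) (a v : nat) : bool :=
  existsb (fun k => Nat.eqb (Nat.iter k par v) a &&
                    forallb (fun j => negb (Nat.eqb (Nat.iter j par v) 0)) (seq 0 k))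
          (seq 1 N).

Definition ancestors (N : nat) (par : nat -> nat) (v : nat) : list nat :=
  filter (fun a => ancb N par a v) (seq 0 N).
Definition cdescendants (N : nat) (par : nat -> nat) (v : nat) : list nat :=
  filter (fun u => Nat.eqb u v || ancb N par v u) (seq 0 N).

Definition sumR (l : list nat) (f : nat -> R) : R :=
  fold_right (fun i acc => f i + acc) 0 l.
Definition prodR (l : list nat) (f : nat -> R) : R :=
  fold_right (fun i acc => f i * acc) 1 l.

(* Flows are 0 .. K-1; flow k has beam b k. *)
Definition flows_of (K : nat) (b : nat -> nat) (v : nat) : list nat :=
  filter (fun k => Nat.eqb (b k) v) (seq 0 K).
Definition nv (K : nat) (b : nat -> nat) (v : nat) : nat :=
  length (flows_of K b v).

Definition inZ (N : nat) (par : nat -> nat) (z : nat -> bool) : Prop :=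
  forall v a, (v < N)%nat -> (a < N)%nat -> ancb N par a v = true ->
    ~ (z v = true /\ z a = true).

Definition ind (b : bool) : R := if b then 1 else 0.

Definition in_convZ (N : nat) (par : nat -> nat) (gamma : nat -> R) : Prop :=
  exists l : list (R * (nat -> bool)),
    Forall (fun p => 0 <= fst p /\ inZ N par (snd p)) l /\
    fold_right (fun p acc => fst p + acc) 0 l = 1 /\
    forall v, (v < N)%nat ->
      gamma v = fold_right (fun p acc => fst p * ind (snd p v) + acc) 0 l.

Definition in_Delta (N K : nat) (b : nat -> nat) (delta : nat -> R) : Prop :=
  (forall k, (k < K)%nat -> 0 <= delta k <= 1) /\
  (forall v, (v < N)%nat -> sumR (flows_of K b v) delta = 1).

Definition feasible N K par b gamma delta : Prop :=
  in_convZ N par gamma /\ in_Delta N K b delta.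

(* all arguments of the logarithms are positive (objective finite);
   otherwise the objective is -infinity *)
Definition finite_obj (K : nat) (b : nat -> nat) (r : nat -> R) gamma delta : Prop :=
  forall k, (k < K)%nat -> 0 < r k * gamma (b k) * delta k.

Definition objective (K : nat) (b : nat -> nat) (r : nat -> R) gamma delta : R :=
  sumR (seq 0 K) (fun k => ln (r k * gamma (b k) * delta k)).

(* (gamma, delta) is an optimal solution of the problem, with the objective
   valued in [-oo, +oo) (ln 0 = -oo). *)
Definition is_optimal N K par b r gamma delta : Prop :=
  feasible N K par b gamma delta /\ finite_obj K b r gamma delta /\
  forall gamma' delta', feasible N K par b gamma' delta' ->
    finite_obj K b r gamma' delta' ->
    objective K b r gamma' delta' <= objective K b r gamma delta.

Definition kappa_star N K par b (v : nat) : R :=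
  INR (nv K b v) / sumR (cdescendants N par v) (fun u => INR (nv K b u)).
Definition gamma_star N K par b (v : nat) : R :=
  kappa_star N K par b v *
  prodR (ancestors N par v) (fun a => 1 - kappa_star N K par b a).
Definition delta_star K b (k : nat) : R := 1 / INR (nv K b (b k)).

(* Main.v *)
Require Import Defs.
From Stdlib Require Import Reals List Arith.
From Stdlib Require Import Lia Lra Bool Classical.
Import ListNotations.
Open Scope R_scope.

Definition sumL {A} (l : list A) (f : A -> R) : R :=
  fold_right (fun i acc => f i + acc) 0 l.

Lemma sumR_L l f : sumR l f = sumL l f. Proof. reflexivity. Qed.

Lemma sumL_ext {A} (l : list A) f g : (forall x, In x l -> f x = g x) -> sumL l f = sumL l g.
Proof. induction l; simpl; intros H; auto. rewrite H, IHl; auto. Qed.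

Lemma sumL_plus {A} (l : list A) f g : sumL l (fun x => f x + g x) = sumL l f + sumL l g.
Proof. induction l; simpl; [lra|]. rewrite IHl; lra. Qed.

Lemma sumL_minus {A} (l : list A) f g : sumL l (fun x => f x - g x) = sumL l f - sumL l g.
Proof. induction l; simpl; [lra|]. rewrite IHl; lra. Qed.

Lemma sumL_scal {A} (l : list A) c f : sumL l (fun x => c * f x) = c * sumL l f.
Proof. induction l; simpl; [lra|]. rewrite IHl; lra. Qed.

Lemma sumL_le {A} (l : list A) f g : (forall x, In x l -> f x <= g x) -> sumL l f <= sumL l g.
Proof. induction l; simpl; intros H; [lra|]. specialize (IHl (fun x h => H x (or_intror h))).
 specialize (H a (or_introl eq_refl)). lra. Qed.

Lemma sumL_zero {A} (l : list A) : sumL l (fun _ => 0) = 0.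
Proof. induction l; simpl; lra. Qed.

Lemma sumL_nonneg {A} (l : list A) f : (forall x, In x l -> 0 <= f x) -> 0 <= sumL l f.
Proof. intros H. apply Rle_trans with (sumL l (fun _ => 0)); [rewrite sumL_zero; lra|].
 apply sumL_le; auto. Qed.

Lemma sumL_app {A} (l1 l2 : list A) f : sumL (l1 ++ l2) f = sumL l1 f + sumL l2 f.
Proof. induction l1; simpl; [lra|]. rewrite IHl1; lra. Qed.

Lemma sumL_map {A B} (l : list A) (g : A -> B) f : sumL (map g l) f = sumL l (fun x => f (g x)).
Proof. induction l; simpl; auto. rewrite IHl; auto. Qed.

Lemma sumL_swap {A B} (l1 : list A) (l2 : list B) F :
  sumL l1 (fun i => sumL l2 (fun j => F i j)) = sumL l2 (fun j => sumL l1 (fun i => F i j)).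
Proof. induction l1; simpl.
 - rewrite sumL_zero; auto.
 - rewrite IHl1, <- sumL_plus; auto. Qed.

Lemma sumL_filter {A} (l : list A) p f :
  sumL (filter p l) f = sumL l (fun x => if p x then f x else 0).
Proof. induction l; simpl; auto. destruct (p a); simpl; rewrite IHl; lra. Qed.

Lemma sumL_const {A} (l : list A) c : sumL l (fun _ => c) = INR (length l) * c.
Proof. induction l; simpl length; rewrite ?S_INR; simpl; [lra|]. rewrite IHl; lra. Qed.

Lemma sumL_single (l : list nat) a f : NoDup l -> In a l ->
  sumL l (fun x => if Nat.eqb x a then f x else 0) = f a.
Proof. induction l; simpl; intros Hn Hi; [tauto|]. inversion Hn; subst.
 destruct (Nat.eqb_spec a0 a).
 - subst. rewrite (sumL_ext _ _ (fun _ => 0)). rewrite sumL_zero; lra.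
   intros x Hx. destruct (Nat.eqb_spec x a); subst; auto. tauto.
 - destruct Hi; [congruence|]. rewrite IHl; auto. lra. Qed.

Lemma sumL_nonpos_zero {A} (l : list A) f : (forall x, In x l -> f x <= 0) -> 0 <= sumL l f ->
  forall x, In x l -> f x = 0.
Proof. induction l; simpl; intros H H0 x Hx; [tauto|].
 assert (sumL l f <= 0). { apply Rle_trans with (sumL l (fun _ => 0)); [|rewrite sumL_zero; lra].
   apply sumL_le; auto. }
 assert (f a <= 0) by auto.
 destruct Hx; subst; [lra|]. apply IHl; auto. lra. Qed.

Lemma sumL_atmost1 (l : list nat) g : NoDup l -> (forall x, 0 <= g x <= 1) ->
  (forall x y, In x l -> In y l -> g x <> 0 -> g y <> 0 -> x = y) -> sumL l g <= 1.
Proof. induction l; simpl; intros Hn Hg Hu; [lra|]. inversion Hn; subst.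
 destruct (Req_dec (g a) 0).
 - rewrite H. assert (sumL l g <= 1) by (apply IHl; auto). lra.
 - rewrite (sumL_ext l g (fun _ => 0)). rewrite sumL_zero. specialize (Hg a); lra.
   intros x Hx. destruct (Req_dec (g x) 0); auto. exfalso. assert (a = x) by (apply Hu; auto).
   subst; tauto. Qed.

Definition prodL {A} (l : list A) (f : A -> R) : R :=
  fold_right (fun i acc => f i * acc) 1 l.
Lemma prodR_L l f : prodR l f = prodL l f. Proof. reflexivity. Qed.

Lemma prodL_ext {A} (l : list A) f g : (forall x, In x l -> f x = g x) -> prodL l f = prodL l g.
Proof. induction l; simpl; intros H; auto. rewrite H, IHl; auto. Qed.
Lemma prodL_mult {A} (l : list A) f g : prodL l (fun x => f x * g x) = prodL l f * prodL l g.
Proof. induction l; simpl; [lra|]. rewrite IHl; lra. Qed.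
Lemma prodL_filter {A} (l : list A) p f :
  prodL (filter p l) f = prodL l (fun x => if p x then f x else 1).
Proof. induction l; simpl; auto. destruct (p a); simpl; rewrite IHl; lra. Qed.
Lemma prodL_one {A} (l : list A) : prodL l (fun _ => 1) = 1.
Proof. induction l; simpl; auto. rewrite IHl; lra. Qed.
Lemma prodL_pos {A} (l : list A) f : (forall x, In x l -> 0 < f x) -> 0 < prodL l f.
Proof. induction l; simpl; intros H; [lra|]. apply Rmult_lt_0_compat; auto. Qed.
Lemma prodL_single (l : list nat) a f : NoDup l -> In a l ->
  prodL l (fun x => if Nat.eqb x a then f x else 1) = f a.
Proof. induction l; simpl; intros Hn Hi; [tauto|]. inversion Hn; subst.
 destruct (Nat.eqb_spec a0 a).
 - subst. rewrite (prodL_ext _ _ (fun _ => 1)). rewrite prodL_one; lra.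
   intros x Hx. destruct (Nat.eqb_spec x a); subst; auto. tauto.
 - destruct Hi; [congruence|]. rewrite IHl; auto. lra. Qed.

Lemma prod_combine (Y : list nat) x k A B C : NoDup Y ->
  (forall y, In y Y -> y <> x -> A y = C y /\ B y = C y) ->
  C x = k * A x + (1 - k) * B x ->
  k * prodL Y A + (1 - k) * prodL Y B = prodL Y C.
Proof. induction Y as [|y Y IH]; simpl; intros Hn H Hx; [lra|]. inversion Hn; subst.
 destruct (Nat.eq_dec y x).
 - subst. rewrite (prodL_ext Y A C), (prodL_ext Y B C). rewrite Hx; lra.
   all: intros z Hz; apply H; auto; intro; subst; tauto.
 - destruct (H y (or_introl eq_refl) n) as [E1 E2]. rewrite E1, E2.
   rewrite <- IH; auto. lra. Qed.

Lemma ln_ineq x : 0 < x -> ln x <= x - 1.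
Proof. intros Hx. pose proof (exp_ineq1_le (ln x)). rewrite exp_ln in H; auto. lra. Qed.
Lemma ln_eq x : 0 < x -> ln x = x - 1 -> x = 1.
Proof. intros Hx He. destruct (Req_dec (ln x) 0).
 - apply ln_inv; auto. lra. rewrite ln_1; auto.
 - pose proof (exp_ineq1 _ H). rewrite exp_ln in H0; auto. lra. Qed.


Lemma ind_and b1 b2 : Defs.ind (b1 && b2) = Defs.ind b1 * Defs.ind b2.
Proof. destruct b1, b2; unfold Defs.ind; simpl; lra. Qed.
Lemma ind_forallb {A} (p : A -> bool) l : Defs.ind (forallb p l) = prodL l (fun a => Defs.ind (p a)).
Proof. induction l; simpl; auto. rewrite ind_and, IHl; auto. Qed.

Open Scope nat_scope.

Section Tree.
Variable N : nat.
Variable par : nat -> nat.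
Hypothesis Htree : is_rooted_tree N par.

Definition it k v := Nat.iter k par v.
Definition ancP a v := exists k, 1 <= k /\ it k v = a /\ forall j, j < k -> it j v <> 0.

Lemma it_add p q v : it (p + q) v = it p (it q v).
Proof. unfold it; apply Nat.iter_add. Qed.
Lemma it_S k v : it (S k) v = par (it k v).
Proof. unfold it; apply Nat.iter_succ. Qed.
Lemma it_Sr k v : it (S k) v = it k (par v).
Proof. unfold it; apply Nat.iter_succ_r. Qed.

Lemma it_lt v k : v < N -> (forall j, j < k -> it j v <> 0) -> it k v < N.
Proof. destruct Htree as [HN [Hp _]]. intros Hv. induction k; intros H; auto.
 rewrite it_S. apply Hp. split; [|apply IHk; intros; apply H; lia].
 pose proof (H k ltac:(lia)). lia. Qed.

Lemma min_zero v : v < N -> exists d, it d v = 0 /\ forall j, j < d -> it j v <> 0.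
Proof. destruct Htree as [_ [_ Hr]]. intros Hv. destruct (Hr v Hv) as [k Hk].
 change (Nat.iter k par v) with (it k v) in Hk.
 revert Hk. induction k as [k IH] using lt_wf_ind. intros Hk.
 destruct (classic (exists j, j < k /\ it j v = 0)) as [[j [Hj1 Hj2]]|Hn].
 - apply (IH j Hj1 Hj2).
 - exists k; split; auto. intros j Hj He. apply Hn; eauto. Qed.

Lemma dep_bound v d : v < N -> it d v = 0 -> (forall j, j < d -> it j v <> 0) -> d < N.
Proof. intros Hv Hd Hm.
 assert (Hinj : forall i j, i < d -> j < d -> it i v = it j v -> i = j).
 { intros i j Hi Hj He. destruct (Nat.lt_trichotomy i j) as [h|[h|h]]; auto; exfalso.
   - apply (Hm (d - j + i)); [lia|]. rewrite it_add, He, <- it_add.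
     replace (d - j + j) with d by lia; auto.
   - apply (Hm (d - i + j)); [lia|]. rewrite it_add, <- He, <- it_add.
     replace (d - i + i) with d by lia; auto. }
 assert (HN : NoDup (map (fun j => it j v) (seq 0 d))).
 { apply NoDup_map_NoDup_ForallPairs; [|apply seq_NoDup].
   intros i j Hi Hj. apply in_seq in Hi, Hj. apply Hinj; lia. }
 assert (Hi : incl (map (fun j => it j v) (seq 0 d)) (seq 1 (N - 1))).
 { intros x Hx. apply in_map_iff in Hx. destruct Hx as [j [<- Hj]]. apply in_seq in Hj.
   apply in_seq. pose proof (Hm j ltac:(lia)).
   assert (it j v < N). { apply it_lt; auto. intros j0 Hj0. apply Hm. lia. } lia. }
 pose proof (NoDup_incl_length HN Hi). rewrite length_map, !length_seq in H. lia. Qed.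

Lemma ancb_iff a v : v < N -> (ancb N par a v = true <-> ancP a v).
Proof. intros Hv. unfold ancb. rewrite existsb_exists. split.
 - intros [k [Hk Hb]]. apply in_seq in Hk. apply andb_true_iff in Hb as [H1 H2].
   apply Nat.eqb_eq in H1. rewrite forallb_forall in H2. exists k. repeat split; try lia; auto.
   intros j Hj. specialize (H2 j (proj2 (in_seq k 0 j) ltac:(lia))).
   apply negb_true_iff, Nat.eqb_neq in H2; auto.
 - intros [k [Hk1 [Hk2 Hk3]]]. destruct (min_zero v Hv) as [d [Hd Hm]].
   pose proof (dep_bound v d Hv Hd Hm).
   assert (k <= d). { destruct (Nat.le_gt_cases k d); auto. exfalso; apply (Hk3 d); auto. }
   exists k. split; [apply in_seq; lia|]. apply andb_true_iff; split.
   + apply Nat.eqb_eq; auto.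
   + apply forallb_forall. intros j Hj. apply in_seq in Hj. apply negb_true_iff, Nat.eqb_neq.
     apply Hk3; lia. Qed.

Lemma anc_lt a v : v < N -> ancP a v -> a < N.
Proof. intros Hv [k [_ [<- H]]]. apply it_lt; auto. Qed.

Lemma anc_irrefl v : v < N -> ~ ancP v v.
Proof. intros Hv [k [Hk1 [Hk2 Hk3]]]. destruct (min_zero v Hv) as [d [Hd _]].
 assert (forall j, it j v <> 0).
 { intros j. induction j as [j IH] using lt_wf_ind.
   destruct (Nat.lt_ge_cases j k); auto.
   replace j with ((j - k) + k) by lia. rewrite it_add, Hk2. apply IH; lia. }
 apply (H d); auto. Qed.

Lemma anc_par a c : c <> 0 -> (ancP a c <-> a = par c \/ ancP a (par c)).
Proof. intros Hc. split.
 - intros [k [Hk1 [Hk2 Hk3]]]. destruct k as [|k]; [lia|]. destruct k as [|k].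
   + left. rewrite <- Hk2. reflexivity.
   + right. exists (S k). split; [lia|]. rewrite <- it_Sr. split; auto.
     intros j Hj. rewrite <- it_Sr. apply Hk3; lia.
 - intros [->|[k [Hk1 [Hk2 Hk3]]]].
   + exists 1. repeat split; auto. intros j Hj. destruct j; [|lia]. simpl; auto.
   + exists (S k). split; [lia|]. rewrite it_Sr. split; auto.
     intros j Hj. destruct j; [simpl; auto|]. rewrite it_Sr. apply Hk3; lia. Qed.

Lemma anc_trans a b c : ancP a b -> ancP b c -> ancP a c.
Proof. intros [ka [Ha1 [Ha2 Ha3]]] [kb [Hb1 [Hb2 Hb3]]]. exists (ka + kb).
 split; [lia|]. rewrite it_add, Hb2. split; auto. intros j Hj.
 destruct (Nat.lt_ge_cases j kb); auto. replace j with ((j - kb) + kb) by lia.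
 rewrite it_add, Hb2. apply Ha3; lia. Qed.

Lemma anc_chain a1 a2 w : ancP a1 w -> ancP a2 w -> a1 = a2 \/ ancP a1 a2 \/ ancP a2 a1.
Proof. intros [k1 [H11 [H12 H13]]] [k2 [H21 [H22 H23]]]. subst a1 a2.
 destruct (Nat.lt_trichotomy k1 k2) as [h|[h|h]].
 - right; right. exists (k2 - k1). split; [lia|]. rewrite <- it_add.
   replace (k2 - k1 + k1) with k2 by lia. split; auto. intros j Hj.
   rewrite <- it_add. apply H23; lia.
 - left; subst; auto.
 - right; left. exists (k1 - k2). split; [lia|]. rewrite <- it_add.
   replace (k1 - k2 + k2) with k1 by lia. split; auto. intros j Hj.
   rewrite <- it_add. apply H13; lia. Qed.

Lemma anc_root w : 0 < w < N -> ancP 0 w.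
Proof. intros Hw. destruct (min_zero w ltac:(lia)) as [d [Hd Hm]]. exists d.
 split; auto. destruct d; [simpl in Hd; lia|lia]. Qed.

Lemma anc_of_root a : ~ ancP a 0.
Proof. intros [k [Hk1 [_ Hk3]]]. apply (Hk3 0); auto; lia. Qed.

End Tree.

Open Scope R_scope.

Section Main.
Variables (N K : nat) (par b : nat -> nat).
Hypothesis Htree : is_rooted_tree N par.
Hypothesis Hb : forall k, (k < K)%nat -> (b k < N)%nat.
Hypothesis Hn : forall v, (v < N)%nat -> (1 <= nv K b v)%nat.

Definition nR v := INR (nv K b v).
Definition descb w v := Nat.eqb w v || ancb N par v w.
Definition S v := sumR (cdescendants N par v) nR.
Definition kap v := kappa_star N K par b v.
Definition T v := prodR (ancestors N par v) (fun a => 1 - kap a).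
Definition m v := S v / T v.
Definition Vs := seq 0 N.

Lemma kap_eq v : kap v = nR v / S v. Proof. reflexivity. Qed.
Lemma gs_eq v : gamma_star N K par b v = kap v * T v. Proof. reflexivity. Qed.

Lemma S_eq v : S v = sumL Vs (fun u => if descb u v then nR u else 0).
Proof. unfold S, cdescendants. rewrite sumR_L, sumL_filter. reflexivity. Qed.
Lemma T_eq v : T v = prodL Vs (fun a => if ancb N par a v then 1 - kap a else 1).
Proof. unfold T, ancestors. rewrite prodR_L, prodL_filter. reflexivity. Qed.

Lemma inVs v : In v Vs <-> (v < N)%nat.
Proof. unfold Vs; rewrite in_seq; lia. Qed.
Lemma Vs_nodup : NoDup Vs. Proof. apply seq_NoDup. Qed.

Lemma ancbP a v : (v < N)%nat -> (ancb N par a v = true <-> ancP par a v).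
Proof. apply ancb_iff; auto. Qed.

Lemma nR_ge1 v : (v < N)%nat -> 1 <= nR v.
Proof. intros. unfold nR. replace 1 with (INR 1) by reflexivity. apply le_INR; auto. Qed.
Lemma nR_ge0 v : 0 <= nR v. Proof. apply pos_INR. Qed.

Lemma sumL_ge1 (f : nat -> R) a : (forall x, 0 <= f x) -> In a Vs -> f a <= sumL Vs f.
Proof. intros H Ha. rewrite <- (sumL_single Vs a f Vs_nodup Ha). apply sumL_le.
 intros x _. destruct (Nat.eqb x a); auto; lra. Qed.
Lemma sumL_ge2 (f : nat -> R) a c : (forall x, 0 <= f x) -> In a Vs -> In c Vs -> a <> c ->
  f a + f c <= sumL Vs f.
Proof. intros H Ha Hc Hac. rewrite <- (sumL_single Vs a f Vs_nodup Ha).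
 rewrite <- (sumL_single Vs c f Vs_nodup Hc). rewrite <- sumL_plus. apply sumL_le.
 intros x _. specialize (H x). destruct (Nat.eqb_spec x a), (Nat.eqb_spec x c); subst; try congruence;
 lra. Qed.

Lemma descb_refl v : descb v v = true.
Proof. unfold descb; rewrite Nat.eqb_refl; auto. Qed.

Lemma S_ge v : (v < N)%nat -> nR v <= S v.
Proof. intros Hv. rewrite S_eq. eapply Rle_trans; [|apply (sumL_ge1 (fun u => if descb u v then nR u else 0) v)].
 - rewrite descb_refl; lra.
 - intros x; destruct (descb x v); [apply nR_ge0|lra].
 - apply inVs; auto. Qed.
Lemma S_ge0 v : 0 <= S v.
Proof. rewrite S_eq. apply sumL_nonneg. intros x _. destruct (descb x v); [apply nR_ge0|lra]. Qed.
Lemma S_pos v : (v < N)%nat -> 0 < S v.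
Proof. intros. pose proof (S_ge v H); pose proof (nR_ge1 v H); lra. Qed.

Lemma S_anc a v : (v < N)%nat -> ancP par a v -> nR a + nR v <= S a.
Proof. intros Hv Ha. assert (Hal : (a < N)%nat) by (eapply anc_lt; eauto).
 assert (a <> v) by (intro; subst; eapply anc_irrefl; eauto).
 rewrite S_eq. eapply Rle_trans; [|apply (sumL_ge2 (fun u => if descb u a then nR u else 0) a v)].
 - rewrite descb_refl. unfold descb. replace (ancb N par a v) with true.
   rewrite orb_true_r; lra. symmetry; apply ancbP; auto.
 - intros x; destruct (descb x a); [apply nR_ge0|lra].
 - apply inVs; auto.
 - apply inVs; auto.
 - auto. Qed.

Lemma kap_pos v : (v < N)%nat -> 0 < kap v <= 1.
Proof. intros Hv. rewrite kap_eq. pose proof (S_pos v Hv). pose proof (S_ge v Hv).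
 pose proof (nR_ge1 v Hv). split.
 - apply Rdiv_lt_0_compat; lra.
 - apply Rmult_le_reg_r with (S v); auto. unfold Rdiv. rewrite Rmult_assoc, Rinv_l; lra. Qed.

Lemma kap_lt1 a v : (v < N)%nat -> ancP par a v -> kap a < 1.
Proof. intros Hv Ha. assert (Hal : (a < N)%nat) by (eapply anc_lt; eauto).
 pose proof (S_anc a v Hv Ha). pose proof (nR_ge1 v Hv). pose proof (S_pos a Hal).
 rewrite kap_eq. apply Rmult_lt_reg_r with (S a); auto. unfold Rdiv.
 rewrite Rmult_assoc, Rinv_l; lra. Qed.

Lemma T_pos v : (v < N)%nat -> 0 < T v.
Proof. intros Hv. unfold T. rewrite prodR_L. apply prodL_pos. intros a Ha.
 unfold ancestors in Ha. apply filter_In in Ha as [_ Ha]. apply ancbP in Ha; auto.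
 pose proof (kap_lt1 a v Hv Ha). lra. Qed.

Lemma gs_pos v : (v < N)%nat -> 0 < gamma_star N K par b v.
Proof. intros Hv. rewrite gs_eq. apply Rmult_lt_0_compat; [apply kap_pos; auto|apply T_pos; auto]. Qed.

Lemma m_eq v : (v < N)%nat -> nR v / gamma_star N K par b v = m v.
Proof. intros Hv. rewrite gs_eq, kap_eq. unfold m. pose proof (S_pos v Hv). pose proof (T_pos v Hv).
 pose proof (nR_ge1 v Hv). field. repeat split; lra. Qed.

Lemma m_ge0 v : (v < N)%nat -> 0 <= m v.
Proof. intros Hv. unfold m. pose proof (S_ge0 v); pose proof (T_pos v Hv).
 apply Rmult_le_pos; auto. apply Rlt_le, Rinv_0_lt_compat; auto. Qed.

Lemma T_root : T 0 = 1.
Proof. rewrite T_eq. rewrite (prodL_ext _ _ (fun _ => 1)). apply prodL_one.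
 intros a _. destruct (ancb N par a 0) eqn:E; auto. apply ancbP in E.
 - exfalso; eapply anc_of_root; eauto.
 - destruct Htree; lia. Qed.

Lemma S_root : S 0 = sumL Vs nR.
Proof. rewrite S_eq. apply sumL_ext. intros u Hu. apply inVs in Hu.
 replace (descb u 0) with true; auto. symmetry. unfold descb.
 destruct u; simpl; auto. apply ancbP; auto. apply (anc_root N par Htree); lia. Qed.

Lemma T_child c : (c < N)%nat -> c <> 0%nat -> T c = (1 - kap (par c)) * T (par c).
Proof. intros Hc Hc0. destruct Htree as [_ [Hp _]]. assert (Hpc : (par c < N)%nat) by (apply Hp; lia).
 rewrite !T_eq. rewrite <- (prodL_single Vs (par c) (fun a => 1 - kap a)) at 1 by (auto using Vs_nodup; apply inVs; auto).
 rewrite <- prodL_mult. apply prodL_ext. intros a Ha.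
 assert (E : ancb N par a c = (Nat.eqb a (par c)) || ancb N par a (par c)).
 { apply eq_iff_eq_true. rewrite orb_true_iff, Nat.eqb_eq, !ancbP by auto.
   apply anc_par; auto. }
 rewrite E. destruct (Nat.eqb_spec a (par c)).
 - subst. replace (ancb N par (par c) (par c)) with false. simpl; lra.
   symmetry. apply not_true_iff_false. rewrite ancbP by auto. apply (anc_irrefl N par Htree); auto.
 - simpl. lra. Qed.


Lemma sumL_if {A} (l : list A) (p : bool) f :
  (if p then sumL l f else 0) = sumL l (fun x => if p then f x else 0).
Proof. destruct p; auto. rewrite sumL_zero; auto. Qed.

Lemma descP w v : (w < N)%nat -> (descb w v = true <-> w = v \/ ancP par v w).
Proof. intros Hw. unfold descb. rewrite orb_true_iff, Nat.eqb_eq, ancbP; tauto. Qed.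

Lemma sib c1 c2 : (c1 < N)%nat -> (c2 < N)%nat -> c1 <> 0%nat -> c2 <> 0%nat ->
  par c1 = par c2 -> ancP par c2 c1 -> False.
Proof. intros H1 H2 H10 H20 Hp Ha. apply anc_par in Ha; auto. destruct Ha as [Ha|Ha].
 - apply (anc_irrefl N par Htree c2); auto. apply (proj2 (anc_par par c2 c2 H20)). left; congruence.
 - apply (anc_irrefl N par Htree c2); auto. eapply anc_trans; [exact Ha|].
   apply (proj2 (anc_par par (par c1) c2 H20)). left; congruence. Qed.

Definition childb c w := negb (Nat.eqb c 0) && Nat.eqb (par c) w.
Definition x w := m w - sumL Vs (fun c => if childb c w then m c else 0).

Lemma child_desc_anc c w u : (c < N)%nat -> (u < N)%nat -> childb c w = true -> descb u c = true ->
  ancP par w u.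
Proof. intros Hc Hu Hch Hd. unfold childb in Hch. apply andb_true_iff in Hch as [H1 H2].
 apply negb_true_iff, Nat.eqb_neq in H1. apply Nat.eqb_eq in H2. subst w.
 apply descP in Hd; auto. destruct Hd as [->|Hd].
 - apply anc_par; auto.
 - eapply anc_trans; [|exact Hd]. apply anc_par; auto. Qed.

Lemma child_uniq c1 c2 w u : (c1 < N)%nat -> (c2 < N)%nat -> (u < N)%nat ->
  childb c1 w = true -> childb c2 w = true -> descb u c1 = true -> descb u c2 = true -> c1 = c2.
Proof. intros H1 H2 Hu Hc1 Hc2 Hd1 Hd2. unfold childb in Hc1, Hc2.
 apply andb_true_iff in Hc1 as [A1 B1], Hc2 as [A2 B2].
 apply negb_true_iff, Nat.eqb_neq in A1, A2. apply Nat.eqb_eq in B1, B2.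
 assert (Hp : par c1 = par c2) by congruence.
 apply descP in Hd1, Hd2; auto.
 destruct Hd1 as [E1|Hd1], Hd2 as [E2|Hd2].
 - congruence.
 - exfalso. subst u. apply (sib c1 c2); auto.
 - exfalso. subst u. apply (sib c2 c1); auto.
 - destruct (anc_chain par c1 c2 u Hd1 Hd2) as [E|[E|E]]; auto; exfalso.
   + apply (sib c2 c1); auto.
   + apply (sib c1 c2); auto. Qed.

Lemma child_sum_le w : (w < N)%nat ->
  sumL Vs (fun c => if childb c w then S c else 0) <= S w - nR w.
Proof. intros Hw.
 transitivity (sumL Vs (fun u => if ancb N par w u then nR u else 0)).
 - rewrite (sumL_ext Vs (fun c => if childb c w then S c else 0)
     (fun c => sumL Vs (fun u => if childb c w then (if descb u c then nR u else 0) else 0))).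
   2:{ intros c _. rewrite S_eq, sumL_if. reflexivity. }
   rewrite sumL_swap. apply sumL_le. intros u Hu. apply inVs in Hu.
   rewrite (sumL_ext Vs _ (fun c => nR u * (if childb c w && descb u c then 1 else 0))).
   2:{ intros c _. destruct (childb c w), (descb u c); simpl; lra. }
   rewrite sumL_scal. destruct (ancb N par w u) eqn:E.
   + pose proof (nR_ge0 u). rewrite <- (Rmult_1_r (nR u)) at 2. apply Rmult_le_compat_l; auto.
     apply sumL_atmost1; auto using Vs_nodup.
     * intros c. destruct (childb c w && descb u c); lra.
     * intros c1 c2 Hc1 Hc2 N1 N2. apply inVs in Hc1, Hc2.
       destruct (childb c1 w) eqn:X1, (descb u c1) eqn:Y1; simpl in N1; try lra.
       destruct (childb c2 w) eqn:X2, (descb u c2) eqn:Y2; simpl in N2; try lra.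
       eapply (child_uniq c1 c2 w u); eauto.
   + rewrite (sumL_ext Vs _ (fun _ => 0)). rewrite sumL_zero; lra.
     intros c Hc. apply inVs in Hc. destruct (childb c w) eqn:X, (descb u c) eqn:Y; simpl; auto.
     exfalso. assert (ancb N par w u = true) by (apply ancbP; auto; eapply child_desc_anc; eauto).
     congruence.
 - rewrite S_eq. rewrite <- (sumL_single Vs w nR Vs_nodup) by (apply inVs; auto).
   rewrite <- sumL_minus. apply Req_le, sumL_ext. intros u Hu. apply inVs in Hu. unfold descb.
   destruct (Nat.eqb_spec u w).
   + subst. replace (ancb N par w w) with false. simpl; lra.
     symmetry; apply not_true_iff_false. rewrite ancbP by auto. apply (anc_irrefl N par Htree); auto.
   + simpl. destruct (ancb N par w u); lra. Qed.

Lemma x_nonneg w : (w < N)%nat -> 0 <= x w.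
Proof. intros Hw. unfold x.
 set (P := sumL Vs (fun c => if childb c w then S c else 0)).
 pose proof (child_sum_le w Hw) as HP. fold P in HP.
 assert (HP0 : 0 <= P). { apply sumL_nonneg. intros c _. destruct (childb c w); [apply S_ge0|lra]. }
 assert (E : sumL Vs (fun c => if childb c w then m c else 0) = P * / ((1 - kap w) * T w)).
 { unfold P. rewrite Rmult_comm, <- sumL_scal. apply sumL_ext. intros c Hc. apply inVs in Hc.
   destruct (childb c w) eqn:X; [|lra]. unfold childb in X.
   apply andb_true_iff in X as [X1 X2]. apply negb_true_iff, Nat.eqb_neq in X1. apply Nat.eqb_eq in X2.
   unfold m. rewrite T_child by auto. rewrite X2. unfold Rdiv; lra. }
 rewrite E. pose proof (S_pos w Hw). pose proof (T_pos w Hw). pose proof (S_ge w Hw).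
 pose proof (nR_ge1 w Hw). unfold m.
 destruct (Req_dec (S w) (nR w)) as [Eq|Neq].
 - assert (P = 0) by lra. rewrite H3, Rmult_0_l, Rminus_0_r.
   apply Rmult_le_pos; [lra|apply Rlt_le, Rinv_0_lt_compat; auto].
 - assert (Hk : 1 - kap w = (S w - nR w) / S w) by (rewrite kap_eq; field; lra).
   rewrite Hk. enough (P * / ((S w - nR w) / S w * T w) <= S w / T w) by lra.
   apply Rle_trans with ((S w - nR w) * / ((S w - nR w) / S w * T w)).
   + apply Rmult_le_compat_r; auto. apply Rlt_le, Rinv_0_lt_compat.
     apply Rmult_lt_0_compat; auto. apply Rdiv_lt_0_compat; lra.
   + apply Req_le. field. repeat split; lra. Qed.

Lemma m_decomp v : (v < N)%nat -> m v = sumL Vs (fun w => if descb w v then x w else 0).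
Proof. intros Hv. destruct Htree as [_ [Hp _]].
 rewrite (sumL_ext Vs _ (fun w => (if descb w v then m w else 0) -
    sumL Vs (fun c => if descb w v then (if childb c w then m c else 0) else 0))).
 2:{ intros w _. unfold x. rewrite <- sumL_if. destruct (descb w v); lra. }
 rewrite sumL_minus, sumL_swap.
 rewrite (sumL_ext Vs (fun c => sumL Vs _) (fun c => if descb c v && negb (Nat.eqb c v) then m c else 0)).
 - rewrite <- sumL_minus. rewrite <- (sumL_single Vs v m Vs_nodup) by (apply inVs; auto).
   apply sumL_ext. intros w _. destruct (Nat.eqb_spec w v).
   + subst. rewrite descb_refl. simpl. lra.
   + simpl. destruct (descb w v); simpl; lra.
 - intros c Hc. apply inVs in Hc. destruct (Nat.eq_dec c 0) as [->|Hc0].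
   + rewrite (sumL_ext Vs _ (fun _ => 0)). rewrite sumL_zero.
     destruct (descb 0 v) eqn:D; simpl; auto. apply descP in D; [|auto].
     destruct D as [<-|D]; [simpl; auto|]. exfalso; eapply anc_of_root; eauto.
     intros w _. unfold childb. simpl. destruct (descb w v); auto.
   + assert (Hpc : (par c < N)%nat) by (apply Hp; lia).
     rewrite (sumL_ext Vs _ (fun w => if Nat.eqb w (par c) then (if descb (par c) v then m c else 0) else 0)).
     2:{ intros w _. unfold childb. replace (Nat.eqb c 0) with false by (symmetry; apply Nat.eqb_neq; auto).
         simpl. destruct (Nat.eqb_spec w (par c)).
         - subst. rewrite Nat.eqb_refl. destruct (descb (par c) v); auto.
         - replace (Nat.eqb (par c) w) with false by (symmetry; apply Nat.eqb_neq; auto).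
           destruct (descb w v); auto. }
     rewrite (sumL_single Vs (par c) (fun _ => if descb (par c) v then m c else 0) Vs_nodup)
       by (apply inVs; auto).
     replace (descb (par c) v) with (descb c v && negb (Nat.eqb c v)); auto.
     apply eq_iff_eq_true. rewrite andb_true_iff, negb_true_iff, Nat.eqb_neq, !descP by auto.
     rewrite (anc_par par v c Hc0). split.
     * intros [[E|E] F]; [congruence|]. destruct E as [E|E]; [left|right]; auto.
     * intros E. split.
       -- right. destruct E; [left|right]; auto.
       -- intro Hcv. subst v. apply (anc_irrefl N par Htree c Hc). apply anc_par; auto.
          destruct E; [left|right]; auto. Qed.

Lemma antichain_bound z : inZ N par z ->
  sumL Vs (fun v => Defs.ind (z v) * m v) <= m 0.
Proof. intros Hz. destruct Htree as [HN _].
 rewrite (sumL_ext Vs _ (fun v => sumL Vs (fun w => if descb w v then Defs.ind (z v) * x w else 0))).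
 2:{ intros v Hv. apply inVs in Hv. rewrite m_decomp by auto. rewrite <- sumL_scal.
     apply sumL_ext. intros w _. destruct (descb w v); lra. }
 rewrite sumL_swap. rewrite (m_decomp 0) by auto.
 apply sumL_le. intros w Hw. apply inVs in Hw.
 replace (descb w 0) with true.
 2:{ symmetry. apply descP; auto. destruct w; [left; auto|right; apply (anc_root N par Htree); lia]. }
 rewrite (sumL_ext Vs _ (fun v => x w * (if descb w v then Defs.ind (z v) else 0))).
 2:{ intros v _. destruct (descb w v); lra. }
 rewrite sumL_scal. rewrite <- (Rmult_1_r (x w)) at 2. apply Rmult_le_compat_l; [apply x_nonneg; auto|].
 apply sumL_atmost1; auto using Vs_nodup.
 - intros v. destruct (descb w v); unfold Defs.ind; [destruct (z v)|]; lra.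
 - intros v1 v2 H1 H2 N1 N2. apply inVs in H1, H2.
   destruct (descb w v1) eqn:D1; [|lra]. destruct (descb w v2) eqn:D2; [|lra].
   destruct (z v1) eqn:Z1; [|unfold Defs.ind in N1; lra].
   destruct (z v2) eqn:Z2; [|unfold Defs.ind in N2; lra].
   apply descP in D1, D2; auto.
   assert (Hno : forall a v, (a < N)%nat -> (v < N)%nat -> ancP par a v -> z v = true -> z a = true -> False).
   { intros a v Ha Hv Hav Zv Za. apply (Hz v a Hv Ha); auto. apply ancbP; auto. }
   destruct D1 as [<-|D1], D2 as [E|D2]; auto.
   + exfalso. apply (Hno v2 w); auto.
   + exfalso. subst. apply (Hno v1 v2); auto.
   + destruct (anc_chain par v1 v2 w D1 D2) as [E|[E|E]]; auto; exfalso.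
     * apply (Hno v1 v2); auto.
     * apply (Hno v2 v1); auto. Qed.

Lemma conv_ge0 g : in_convZ N par g -> forall v, (v < N)%nat -> 0 <= g v.
Proof. intros [l [Hl [_ Hg]]] v Hv. rewrite Hg by auto.
 change (0 <= sumL l (fun p => fst p * Defs.ind (snd p v))). apply sumL_nonneg.
 intros p Hp. rewrite Forall_forall in Hl. destruct (Hl p Hp) as [H _].
 apply Rmult_le_pos; auto. unfold Defs.ind; destruct (snd p v); lra. Qed.

Lemma conv_bound g : in_convZ N par g -> sumL Vs (fun v => g v * m v) <= m 0.
Proof. intros [l [Hl [H1 Hg]]].
 rewrite (sumL_ext Vs _ (fun v => sumL l (fun p => fst p * (Defs.ind (snd p v) * m v)))).
 2:{ intros v Hv. apply inVs in Hv. rewrite Hg by auto.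
     change (sumL l (fun p => fst p * Defs.ind (snd p v)) * m v =
             sumL l (fun p => fst p * (Defs.ind (snd p v) * m v))).
     rewrite Rmult_comm, <- sumL_scal. apply sumL_ext; intros; lra. }
 rewrite sumL_swap.
 change (fold_right (fun p acc => fst p + acc) 0 l) with (sumL l (fun p => fst p)) in H1.
 apply Rle_trans with (sumL l (fun p => fst p * m 0)).
 - apply sumL_le. intros p Hp. rewrite sumL_scal. rewrite Forall_forall in Hl.
   destruct (Hl p Hp) as [Hp1 Hp2]. apply Rmult_le_compat_l; auto.
   apply antichain_bound; auto.
 - rewrite (sumL_ext l _ (fun p => m 0 * fst p)) by (intros; lra).
   assert (E : sumL l (fun p => m 0 * fst p) = m 0 * 1) by (rewrite sumL_scal; f_equal; exact H1).
   rewrite E; lra. Qed.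

Lemma group g : sumL (seq 0 K) g = sumL Vs (fun v => sumL (flows_of K b v) g).
Proof. unfold flows_of.
 rewrite (sumL_ext Vs _ (fun v => sumL (seq 0 K) (fun k => if Nat.eqb (b k) v then g k else 0)))
   by (intros; apply sumL_filter).
 rewrite sumL_swap. apply sumL_ext. intros k Hk. apply in_seq in Hk.
 rewrite (sumL_ext Vs _ (fun v => if Nat.eqb v (b k) then g k else 0)).
 - rewrite (sumL_single Vs (b k) (fun _ => g k)); auto using Vs_nodup. apply inVs; apply Hb; lia.
 - intros v _. rewrite Nat.eqb_sym; auto. Qed.

Lemma group_b f : sumL (seq 0 K) (fun k => f (b k)) = sumL Vs (fun v => nR v * f v).
Proof. rewrite group. apply sumL_ext. intros v _.
 rewrite (sumL_ext _ _ (fun _ => f v)).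
 - rewrite sumL_const. reflexivity.
 - intros k Hk. unfold flows_of in Hk. apply filter_In in Hk as [_ Hk]. apply Nat.eqb_eq in Hk.
   rewrite Hk; auto. Qed.

Lemma sum_n : sumL Vs nR = INR K.
Proof. pose proof (group_b (fun _ => 1)). cbv beta in H. rewrite sumL_const, length_seq in H.
 rewrite (sumL_ext Vs _ nR) in H by (intros; lra). lra. Qed.

Lemma m_root : m 0 = INR K.
Proof. unfold m. rewrite T_root, S_root, sum_n. field. Qed.

Definition upd (c : nat -> bool) x := fun y => if Nat.eqb y x then true else c y.
Fixpoint gen (L : list nat) : list (R * (nat -> bool)) :=
  match L with
  | [] => [(1, fun _ => false)]
  | x :: L' => map (fun p => (kap x * fst p, upd (snd p) x)) (gen L') ++
               map (fun p => ((1 - kap x) * fst p, snd p)) (gen L')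
  end.
Definition E L (h : nat -> bool -> R) :=
  sumL (gen L) (fun p => fst p * prodL Vs (fun y => h y (snd p y))).

Lemma E_formula L : NoDup L -> forall h, E L h = prodL Vs (fun y =>
  if in_dec Nat.eq_dec y L then kap y * h y true + (1 - kap y) * h y false else h y false).
Proof. induction L as [|x L IH]; intros HL h.
 - unfold E; simpl. rewrite Rplus_0_r, Rmult_1_l. apply prodL_ext. intros; auto.
 - inversion HL; subst. unfold E. simpl gen. rewrite sumL_app, !sumL_map. simpl fst; simpl snd.
   set (h' := fun y bb => if Nat.eqb y x then h x true else h y bb).
   rewrite (sumL_ext (gen L) _ (fun p => kap x * (fst p * prodL Vs (fun y => h' y (snd p y))))).
   2:{ intros p _. rewrite Rmult_assoc. f_equal. f_equal. apply prodL_ext. intros y _.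
       unfold h', upd. destruct (Nat.eqb_spec y x); subst; auto. }
   rewrite (sumL_ext (gen L) (fun p => (1 - kap x) * fst p * _)
     (fun p => (1 - kap x) * (fst p * prodL Vs (fun y => h y (snd p y))))) by (intros; lra).
   rewrite !sumL_scal. fold (E L h') (E L h). rewrite !IH by auto.
   apply (prod_combine Vs x (kap x)); auto using Vs_nodup.
   + intros y _ Hyx. unfold h'. replace (Nat.eqb y x) with false by (symmetry; apply Nat.eqb_neq; auto).
     destruct (in_dec Nat.eq_dec y L) as [i1|n1], (in_dec Nat.eq_dec y (x :: L)) as [i2|n2];
     [split; reflexivity| exfalso; apply n2; right; exact i1
     | exfalso; destruct i2; [congruence|tauto] | split; reflexivity].
   + unfold h'. rewrite Nat.eqb_refl.
     destruct (in_dec Nat.eq_dec x L) as [i1|n1]; [tauto|].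
     destruct (in_dec Nat.eq_dec x (x :: L)) as [i2|n2]; [reflexivity|exfalso; apply n2; left; auto]. Qed.

Lemma gen_nonneg L : (forall y, In y L -> 0 <= kap y <= 1) -> forall p, In p (gen L) -> 0 <= fst p.
Proof. induction L as [|x L IH]; simpl; intros Hk p Hp.
 - destruct Hp as [<-|[]]; simpl; lra.
 - apply in_app_iff in Hp. destruct Hp as [Hp|Hp]; apply in_map_iff in Hp; destruct Hp as [q [<- Hq]];
   simpl; pose proof (Hk x (or_introl eq_refl)); pose proof (IH (fun y h => Hk y (or_intror h)) q Hq);
   apply Rmult_le_pos; lra. Qed.

Definition sel (c : nat -> bool) v := c v && forallb (fun a => negb (c a)) (ancestors N par v).

Lemma sel_inZ c : inZ N par (sel c).
Proof. intros v a Hv Ha Hav [H1 H2]. unfold sel in H1, H2.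
 apply andb_true_iff in H1 as [_ H1]. apply andb_true_iff in H2 as [H2 _].
 rewrite forallb_forall in H1. assert (In a (ancestors N par v)).
 { unfold ancestors. apply filter_In. split; auto. apply in_seq; lia. }
 specialize (H1 a H). rewrite H2 in H1. discriminate. Qed.

Definition hv v y bb := (if Nat.eqb y v then Defs.ind bb else 1) *
  (if ancb N par y v then Defs.ind (negb bb) else 1).

Lemma sel_ind c v : (v < N)%nat -> Defs.ind (sel c v) = prodL Vs (fun y => hv v y (c y)).
Proof. intros Hv. unfold sel, hv. rewrite ind_and, ind_forallb, prodL_mult.
 rewrite (prodL_single Vs v (fun y => Defs.ind (c y))); auto using Vs_nodup; [|apply inVs; auto].
 f_equal. unfold ancestors. rewrite prodL_filter. reflexivity. Qed.

Lemma gamma_star_conv : in_convZ N par (gamma_star N K par b).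
Proof.
 assert (Hk : forall y, In y Vs -> 0 <= kap y <= 1).
 { intros y Hy. apply inVs in Hy. pose proof (kap_pos y Hy); lra. }
 exists (map (fun p => (fst p, sel (snd p))) (gen Vs)). split; [|split].
 - apply Forall_forall. intros q Hq. apply in_map_iff in Hq. destruct Hq as [p [<- Hp]].
   simpl. split; [eapply gen_nonneg; eauto|apply sel_inZ].
 - change (sumL (map (fun p => (fst p, sel (snd p))) (gen Vs)) (fun p => fst p) = 1).
   rewrite sumL_map. simpl.
   transitivity (E Vs (fun _ _ => 1)).
   + unfold E. apply sumL_ext. intros p _. rewrite prodL_one; lra.
   + rewrite E_formula by apply Vs_nodup. rewrite (prodL_ext _ _ (fun _ => 1)). apply prodL_one.
     intros y _. destruct (in_dec Nat.eq_dec y Vs); lra.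
 - intros v Hv.
   change (gamma_star N K par b v = sumL (map (fun p => (fst p, sel (snd p))) (gen Vs))
      (fun p => fst p * Defs.ind (snd p v))).
   rewrite sumL_map. simpl.
   transitivity (E Vs (hv v)).
   2:{ unfold E. apply sumL_ext. intros p _. rewrite sel_ind; auto. }
   rewrite E_formula by apply Vs_nodup. rewrite gs_eq, T_eq.
   rewrite <- (prodL_single Vs v kap Vs_nodup) by (apply inVs; auto).
   rewrite <- prodL_mult. apply prodL_ext. intros y Hy.
   destruct (in_dec Nat.eq_dec y Vs); [|tauto]. unfold hv, Defs.ind.
   destruct (Nat.eqb_spec y v).
   + subst. replace (ancb N par v v) with false. simpl; lra.
     symmetry; apply not_true_iff_false. rewrite ancbP by auto. apply (anc_irrefl N par Htree); auto.
   + destruct (ancb N par y v); simpl; lra. Qed.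

Lemma nR_pos v : (v < N)%nat -> 0 < nR v.
Proof. intros; pose proof (nR_ge1 v H); lra. Qed.

Lemma delta_star_in : in_Delta N K b (delta_star K b).
Proof. split.
 - intros k Hk. unfold delta_star. fold (nR (b k)). pose proof (nR_ge1 (b k) (Hb k Hk)). split.
   + apply Rlt_le, Rdiv_lt_0_compat; lra.
   + apply Rmult_le_reg_r with (nR (b k)); [lra|]. unfold Rdiv. rewrite Rmult_assoc, Rinv_l; lra.
 - intros v Hv. rewrite sumR_L. rewrite (sumL_ext _ _ (fun _ => 1 / nR v)).
   + rewrite sumL_const. fold (nv K b v). fold (nR v). field. pose proof (nR_ge1 v Hv); lra.
   + intros k Hk. unfold flows_of in Hk. apply filter_In in Hk as [_ Hk]. apply Nat.eqb_eq in Hk.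
     unfold delta_star. rewrite Hk. reflexivity. Qed.

Lemma star_feasible : feasible N K par b (gamma_star N K par b) (delta_star K b).
Proof. split; [apply gamma_star_conv|apply delta_star_in]. Qed.

Lemma star_finite r : (forall k, (k < K)%nat -> 0 < r k) ->
  finite_obj K b r (gamma_star N K par b) (delta_star K b).
Proof. intros Hr k Hk. pose proof (gs_pos (b k) (Hb k Hk)). pose proof (nR_pos (b k) (Hb k Hk)).
 unfold delta_star. fold (nR (b k)).
 apply Rmult_lt_0_compat; [apply Rmult_lt_0_compat; auto|]. apply Rdiv_lt_0_compat; lra. Qed.

Lemma pos_of_prod r g d : 0 < r -> 0 <= g -> 0 <= d -> 0 < r * g * d -> 0 < g /\ 0 < d.
Proof. intros Hr Hg Hd H. split.
 - destruct (Rle_lt_or_eq_dec 0 g Hg); auto. subst. rewrite Rmult_0_r, Rmult_0_l in H. lra.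
 - destruct (Rle_lt_or_eq_dec 0 d Hd); auto. subst. rewrite Rmult_0_r in H. lra. Qed.

Lemma main_ineq r g d : (forall k, (k < K)%nat -> 0 < r k) ->
  feasible N K par b g d -> finite_obj K b r g d ->
  objective K b r g d <= objective K b r (gamma_star N K par b) (delta_star K b) /\
  (objective K b r (gamma_star N K par b) (delta_star K b) <= objective K b r g d ->
   (forall v, (v < N)%nat -> g v = gamma_star N K par b v) /\
   (forall k, (k < K)%nat -> d k = delta_star K b k)).
Proof. intros Hr [Hg Hd] Hf.
 set (gs := gamma_star N K par b).
 set (a := fun k => g (b k) / gs (b k)).
 set (dd := fun k => d k * nR (b k)).
 assert (Hpos : forall k, (k < K)%nat -> 0 < g (b k) /\ 0 < d k).
 { intros k Hk. apply (pos_of_prod (r k)); auto.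
   - apply conv_ge0; auto.
   - destruct Hd as [Hd _]. apply Hd; auto. }
 assert (Hapos : forall k, (k < K)%nat -> 0 < a k).
 { intros k Hk. unfold a. apply Rdiv_lt_0_compat; [apply Hpos; auto|apply gs_pos; auto]. }
 assert (Hdpos : forall k, (k < K)%nat -> 0 < dd k).
 { intros k Hk. unfold dd. apply Rmult_lt_0_compat; [apply Hpos; auto|apply nR_pos; auto]. }
 assert (Hdiff : objective K b r g d - objective K b r gs (delta_star K b) =
   sumL (seq 0 K) (fun k => ln (a k) + ln (dd k))).
 { unfold objective. rewrite sumR_L. rewrite (sumR_L (seq 0 K) (fun k => ln (r k * gs (b k) * delta_star K b k))). rewrite <- sumL_minus. apply sumL_ext. intros k Hk. apply in_seq in Hk.
   assert (Hk' : (k < K)%nat) by lia.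
   pose proof (star_finite r Hr k Hk') as H0. fold gs in H0.
   replace (r k * g (b k) * d k) with (r k * gs (b k) * delta_star K b k * a k * dd k).
   - assert (P1 : 0 < r k * gs (b k) * delta_star K b k * a k) by (apply Rmult_lt_0_compat; auto).
     rewrite (ln_mult _ (dd k) P1 (Hdpos k Hk')).
     rewrite (ln_mult _ (a k) H0 (Hapos k Hk')). lra.
   - unfold a, dd, delta_star. fold (nR (b k)). pose proof (gs_pos (b k) (Hb k Hk')).
     pose proof (nR_pos (b k) (Hb k Hk')). fold gs in H. field. lra. }
 set (D := sumL (seq 0 K) (fun k => (ln (a k) - (a k - 1)) + (ln (dd k) - (dd k - 1)))).
 assert (HD : forall k, In k (seq 0 K) -> (ln (a k) - (a k - 1)) + (ln (dd k) - (dd k - 1)) <= 0).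
 { intros k Hk. apply in_seq in Hk. pose proof (ln_ineq (a k) (Hapos k ltac:(lia))).
   pose proof (ln_ineq (dd k) (Hdpos k ltac:(lia))). lra. }
 assert (HD0 : D <= 0).
 { unfold D. apply Rle_trans with (sumL (seq 0 K) (fun _ => 0)); [apply sumL_le; auto|].
   rewrite sumL_zero; lra. }
 assert (HA : sumL (seq 0 K) a <= INR K).
 { unfold a. rewrite (group_b (fun v => g v / gs v)).
   rewrite (sumL_ext Vs _ (fun v => g v * m v)).
   - rewrite <- m_root. apply conv_bound; auto.
   - intros v Hv. apply inVs in Hv. rewrite <- m_eq by auto. fold gs. unfold Rdiv.
     pose proof (gs_pos v Hv). fold gs in H. lra. }
 assert (HDD : sumL (seq 0 K) dd = INR K).
 { unfold dd. rewrite group. rewrite <- sum_n. apply sumL_ext. intros v Hv. apply inVs in Hv.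
   rewrite (sumL_ext _ _ (fun k => nR v * d k)).
   - rewrite sumL_scal. destruct Hd as [_ Hd]. specialize (Hd v Hv). rewrite sumR_L in Hd.
     rewrite Hd; lra.
   - intros k Hk. unfold flows_of in Hk. apply filter_In in Hk as [_ Hk]. apply Nat.eqb_eq in Hk.
     rewrite Hk; lra. }
 assert (HK : sumL (seq 0 K) (fun _ => 1) = INR K) by (rewrite sumL_const, length_seq; lra).
 assert (Hsplit : sumL (seq 0 K) (fun k => ln (a k) + ln (dd k)) =
   D + (sumL (seq 0 K) a - sumL (seq 0 K) (fun _ => 1)) + (sumL (seq 0 K) dd - sumL (seq 0 K) (fun _ => 1))).
 { unfold D. rewrite <- !sumL_minus, <- !sumL_plus. apply sumL_ext. intros; lra. }
 split.
 - lra.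
 - intros Hge. assert (HD1 : 0 <= D) by lra.
   pose proof (sumL_nonpos_zero _ _ HD HD1) as Z.
   assert (Z2 : forall k, (k < K)%nat -> a k = 1 /\ dd k = 1).
   { intros k Hk. assert (Hin : In k (seq 0 K)) by (apply in_seq; lia).
     specialize (Z k Hin). pose proof (ln_ineq (a k) (Hapos k Hk)). pose proof (ln_ineq (dd k) (Hdpos k Hk)).
     split; [apply ln_eq; auto|apply ln_eq; auto]; lra. }
   split.
   + intros v Hv. pose proof (Hn v Hv). unfold nv in H.
     destruct (flows_of K b v) as [|k l] eqn:E; simpl in H; [lia|].
     assert (Hk : In k (flows_of K b v)) by (rewrite E; left; auto).
     unfold flows_of in Hk. apply filter_In in Hk as [Hk Hbk]. apply in_seq in Hk. apply Nat.eqb_eq in Hbk.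
     destruct (Z2 k ltac:(lia)) as [Z3 _]. unfold a in Z3. rewrite Hbk in Z3.
     pose proof (gs_pos v Hv). fold gs in H0. fold gs.
     apply Rmult_eq_reg_r with (/ gs v). unfold Rdiv in Z3. rewrite Z3, Rinv_r; lra.
     apply Rinv_neq_0_compat; lra.
   + intros k Hk. destruct (Z2 k Hk) as [_ Z3]. unfold dd in Z3. unfold delta_star. fold (nR (b k)).
     pose proof (nR_pos (b k) (Hb k Hk)). apply Rmult_eq_reg_r with (nR (b k)); [|lra].
     rewrite Z3. field. lra. Qed.

End Main.

Theorem mainTheorem3 (N K : nat) (par b : nat -> nat) (r : nat -> R)
  (Htree : is_rooted_tree N par)
  (Hb : forall k, (k < K)%nat -> (b k < N)%nat)
  (Hr : forall k, (k < K)%nat -> 0 < r k)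
  (Hn : forall v, (v < N)%nat -> (1 <= nv K b v)%nat) :
  forall gamma delta : nat -> R,
    is_optimal N K par b r gamma delta <->
    ((forall v, (v < N)%nat -> gamma v = gamma_star N K par b v) /\
     (forall k, (k < K)%nat -> delta k = delta_star K b k)).
Proof.
 intros g d. split.
 - intros [Hfeas [Hfin Hmax]].
   destruct (main_ineq N K par b Htree Hb Hn r g d Hr Hfeas Hfin) as [_ H].
   apply H. apply Hmax; [apply star_feasible; auto|apply star_finite; auto].
 - intros [Eg Ed].
   assert (Hobj : objective K b r g d = objective K b r (gamma_star N K par b) (delta_star K b)).
   { unfold objective. rewrite !sumR_L. apply sumL_ext. intros k Hk. apply in_seq in Hk.
     rewrite Eg, Ed by (try apply Hb; lia). reflexivity. }
   destruct (star_feasible N K par b Htree Hb Hn) as [[l [Hl1 [Hl2 Hl3]]] [Hd1 Hd2]].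
   split; [split|split].
   + exists l. repeat split; auto. intros v Hv. rewrite Eg by auto. apply Hl3; auto.
   + split.
     * intros k Hk. rewrite Ed by auto. apply Hd1; auto.
     * intros v Hv. rewrite <- (Hd2 v Hv). rewrite !sumR_L. apply sumL_ext. intros k Hk.
       unfold flows_of in Hk. apply filter_In in Hk as [Hk _]. apply in_seq in Hk. apply Ed; lia.
   + intros k Hk. rewrite Eg, Ed by (auto). apply star_finite; auto.
   + intros g' d' Hf' Hfin'. rewrite Hobj.
     destruct (main_ineq N K par b Htree Hb Hn r g' d' Hr Hf' Hfin') as [H _]. exact H.
Qed.
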